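(* Let $a=1/4$, $d=3/4$, $e=1/2$. Let $U_1$ be the uninorm on $[0,1]$ defined by $U_1(p,q)=1$ if $\max(p,q)=1$; $U_1(p,q)=0$ if $\min(p,q)=0$ and $\max(p,q)<1$; and $U_1(p,q)=\big(\min(p^{2^{-n}},q^{2^{-m}})\big)^{2^{n+m}}$ if $p\in\,]2^{-2^{n+1}},2^{-2^{n}}]$, $q\in\,]2^{-2^{m+1}},2^{-2^{m}}]$, $n,m\in\mathbb{Z}$. Let $U_1^*(x,y)=\tfrac14+\tfrac12U_1(2(x-\tfrac14),2(y-\tfrac14))$ for $x,y\in\,]\tfrac14,\tfrac34[$. Let $$f(s)=\begin{cases}4s^2 & s\le \tfrac14,\\ 2(s-\tfrac14)^2+\tfrac14 & s\in\,]\tfrac14,\tfrac34[,\\ 4(s-\tfrac34)^2+\tfrac34 & s\ge\tfrac34,\end{cases}$$ with iterates $f^{(n)}$, $n\in\mathbb{Z}$ (so $f^{(n)}(s)=\tfrac14(4s)^{2^n}$ for $s\le\tfrac14$, $\tfrac14+\tfrac12(2(s-\tfrac14))^{2^n}$ for $s\in\,]\tfrac14,\tfrac34[$, $\tfrac34+\tfrac14(4(s-\tfrac34))^{2^n}$ for $s\ge\tfrac34$). Define $U:[0,1]^2\to[0,1]$ by $$U(x,y)=\begin{cases}1 & \max(x,y)=1,\\ 0 & x,y\in[0,a],\\ 1 & x,y\in[d,1[,\\ d & (x,y)\in[0,a]\times[d,1[\ \cup\ [d,1[\times[0,a],\\ f^{(n)}(x) & x\in[0,a]\cup[d,1[,\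 y\in\,]f^{(n+1)}(e),f^{(n)}(e)],\ n\in\mathbb{Z},\\ f^{(n)}(y) & y\in[0,a]\cup[d,1[,\ x\in\,]f^{(n+1)}(e),f^{(n)}(e)],\ n\in\mathbb{Z},\\ U_1^*(x,y) & x,y\in\,]a,d[.\end{cases}$$ Then $U$ is a disjunctive uninorm with neutral element $1/2$.
   Context: A uninorm is a map $U:[0,1]^2\to[0,1]$ that is commutative, associative, non-decreasing in each variable, and has a neutral element $e\in[0,1]$; it is disjunctive if $U(1,0)=1$. For a continuous strictly increasing bijection $f:[0,1]\to[0,1]$: $f^{(0)}=\mathrm{id}$, $f^{(n)}=f\circ f^{(n-1)}$ and $f^{(-n)}=f^{-1}\circ f^{(-n+1)}$ for $n\in\mathbb{N}$. The intervals $]f^{(n+1)}(1/2),f^{(n)}(1/2)]$, $n\in\mathbb{Z}$, partition $]1/4,3/4[$. *)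

(* Defs.v *)
From Stdlib Require Import Reals Lra ZArith Bool ClassicalEpsilon.
Open Scope R_scope.
Local Open Scope bool_scope.

Definition in01 (x : R) : Prop := 0 <= x <= 1.

Definition is_uninorm (U : R -> R -> R) (e : R) : Prop :=
  (forall x y, in01 x -> in01 y -> in01 (U x y)) /\
  (forall x y, in01 x -> in01 y -> U x y = U y x) /\
  (forall x y z, in01 x -> in01 y -> in01 z -> U (U x y) z = U x (U y z)) /\
  (forall x1 x2 y, in01 x1 -> in01 x2 -> in01 y -> x1 <= x2 -> U x1 y <= U x2 y) /\
  (forall x y1 y2, in01 x -> in01 y1 -> in01 y2 -> y1 <= y2 -> U x y1 <= U x y2) /\
  in01 e /\
  (forall x, in01 x -> U e x = x /\ U x e = x).

Definition disjunctive_uninorm (U : R -> R -> R) (e : R) : Prop :=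
  is_uninorm U e /\ U 1 0 = 1.

Definition Rleb (x y : R) : bool := if Rle_dec x y then true else false.
Definition Rltb (x y : R) : bool := if Rlt_dec x y then true else false.
Definition Reqb (x y : R) : bool := if Req_EM_T x y then true else false.

Definition U1_band (n : Z) (p : R) : Prop :=
  Rpower 2 (- powerRZ 2 (n + 1)) < p /\ p <= Rpower 2 (- powerRZ 2 n).

(* the integer n with p in the n-th band (unique for p in ]0,1[) *)
Definition U1_idx (p : R) : Z := epsilon (inhabits 0%Z) (fun n => U1_band n p).

Definition U1 (p q : R) : R :=
  if Reqb (Rmax p q) 1 then 1
  else if Reqb (Rmin p q) 0 then 0
  else
    let n := U1_idx p in
    let m := U1_idx q in
    Rpower (Rmin (Rpower p (powerRZ 2 (- n))) (Rpower q (powerRZ 2 (- m))))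
           (powerRZ 2 (n + m)).

Definition U1star (x y : R) : R :=
  1/4 + 1/2 * U1 (2 * (x - 1/4)) (2 * (y - 1/4)).

Definition f (s : R) : R :=
  if Rleb s (1/4) then 4 * s ^ 2
  else if Rltb s (3/4) then 2 * (s - 1/4) ^ 2 + 1/4
  else 4 * (s - 3/4) ^ 2 + 3/4.

Definition finv (y : R) : R :=
  epsilon (inhabits 0) (fun x => in01 x /\ f x = y).

Definition fiter (n : Z) : R -> R :=
  match n with
  | Z0 => fun s => s
  | Zpos p => fun s => Nat.iter (Pos.to_nat p) f s
  | Zneg p => fun s => Nat.iter (Pos.to_nat p) finv s
  end.

Definition a_ : R := 1/4.
Definition d_ : R := 3/4.
Definition e_ : R := 1/2.

Definition f_band (n : Z) (y : R) : Prop :=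
  fiter (n + 1) e_ < y /\ y <= fiter n e_.

Definition f_idx (y : R) : Z := epsilon (inhabits 0%Z) (fun n => f_band n y).

Definition inA (x : R) : bool := Rleb 0 x && Rleb x a_.
Definition inD (x : R) : bool := Rleb d_ x && Rltb x 1.
Definition inMid (x : R) : bool := Rltb a_ x && Rltb x d_.

Definition U (x y : R) : R :=
  if Reqb (Rmax x y) 1 then 1
  else if inA x && inA y then 0
  else if inD x && inD y then 1
  else if (inA x && inD y) || (inD x && inA y) then d_
  else if (inA x || inD x) && inMid y then fiter (f_idx y) x
  else if (inA y || inD y) && inMid x then fiter (f_idx x) y
  else U1star x y.

(* Main.v *)
Require Import Defs.
From Stdlib Require Import Reals.
From Stdlib Require Import Lra Lia ZArith ClassicalEpsilon.
Require Import Defs.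
Open Scope R_scope.

Lemma Rleb_true x y : x <= y -> Rleb x y = true.
Proof. unfold Rleb; destruct (Rle_dec x y); auto; lra. Qed.
Lemma Rleb_false x y : y < x -> Rleb x y = false.
Proof. unfold Rleb; destruct (Rle_dec x y); auto; lra. Qed.
Lemma Rltb_true x y : x < y -> Rltb x y = true.
Proof. unfold Rltb; destruct (Rlt_dec x y); auto; lra. Qed.
Lemma Rltb_false x y : y <= x -> Rltb x y = false.
Proof. unfold Rltb; destruct (Rlt_dec x y); auto; lra. Qed.
Lemma Reqb_true x : Reqb x x = true.
Proof. unfold Reqb; destruct (Req_EM_T x x); auto; lra. Qed.
Lemma Reqb_false x y : x <> y -> Reqb x y = false.
Proof. unfold Reqb; destruct (Req_EM_T x y); auto; lra. Qed.

Lemma f_in01 x : in01 x -> in01 (f x).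
Proof. unfold in01, f, Rleb, Rltb; intros H.
  destruct (Rle_dec x (1/4)); [|destruct (Rlt_dec x (3/4))]; nra. Qed.

Lemma f_incr x y : in01 x -> in01 y -> x < y -> f x < f y.
Proof. unfold in01, f, Rleb, Rltb; intros Hx Hy H.
  destruct (Rle_dec x (1/4)); [|destruct (Rlt_dec x (3/4))];
  destruct (Rle_dec y (1/4)); try destruct (Rlt_dec y (3/4)); nra. Qed.

Lemma f_le x y : in01 x -> in01 y -> (x <= y <-> f x <= f y).
Proof. intros Hx Hy; split; intro H.
  - destruct (Req_dec x y). subst; lra. left; apply f_incr; auto; lra.
  - destruct (Rle_lt_dec x y); auto. pose proof (f_incr y x Hy Hx r); lra. Qed.

Lemma f_inj x y : in01 x -> in01 y -> f x = f y -> x = y.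
Proof. intros Hx Hy H. destruct (f_le x y Hx Hy), (f_le y x Hy Hx). 
  apply Rle_antisym; [apply H1|apply H3]; lra. Qed.

Lemma f_surj y : in01 y -> exists x, in01 x /\ f x = y.
Proof. unfold in01; intros Hy.
  destruct (Rle_dec y (1/4)).
  - exists (sqrt y / 2). pose proof (sqrt_sqrt y ltac:(lra)). pose proof (sqrt_pos y).
    assert (sqrt y <= 1/2) by nra. unfold f, Rleb; destruct (Rle_dec (sqrt y/2) (1/4)); [split; nra|lra].
  - destruct (Rlt_dec y (3/4)).
    + exists (1/4 + sqrt ((y-1/4)/2)). pose proof (sqrt_sqrt ((y-1/4)/2) ltac:(lra)).
      pose proof (sqrt_pos ((y-1/4)/2)).
      assert (0 < sqrt ((y-1/4)/2)). { apply sqrt_lt_R0; lra. }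
      assert (sqrt ((y-1/4)/2) < 1/2) by nra.
      unfold f, Rleb, Rltb; destruct (Rle_dec (1/4 + sqrt ((y-1/4)/2)) (1/4)); [lra|].
      destruct (Rlt_dec (1/4 + sqrt ((y-1/4)/2)) (3/4)); [split; nra|lra].
    + exists (3/4 + sqrt (y - 3/4) / 2). pose proof (sqrt_sqrt (y-3/4) ltac:(lra)).
      pose proof (sqrt_pos (y-3/4)). assert (sqrt (y-3/4) <= 1/2) by nra.
      unfold f, Rleb, Rltb; destruct (Rle_dec (3/4 + sqrt (y - 3/4) / 2) (1/4)); [lra|].
      destruct (Rlt_dec (3/4 + sqrt (y - 3/4) / 2) (3/4)); [lra|split; nra].
Qed.

Lemma finv_spec y : in01 y -> in01 (finv y) /\ f (finv y) = y.
Proof. intro H. unfold finv. apply (epsilon_spec (inhabits 0) (fun x => in01 x /\ f x = y)).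
  apply f_surj; auto. Qed.

Lemma finv_f x : in01 x -> finv (f x) = x.
Proof. intro H. destruct (finv_spec (f x) (f_in01 x H)). apply f_inj; auto. Qed.

Lemma finv_le y1 y2 : in01 y1 -> in01 y2 -> (y1 <= y2 <-> finv y1 <= finv y2).
Proof. intros H1 H2. destruct (finv_spec y1 H1) as [A1 B1], (finv_spec y2 H2) as [A2 B2].
  rewrite (f_le _ _ A1 A2), B1, B2. tauto. Qed.

Lemma f_0 : f 0 = 0. Proof. unfold f; rewrite Rleb_true by lra; lra. Qed.
Lemma f_14 : f (1/4) = 1/4. Proof. unfold f; rewrite Rleb_true by lra; lra. Qed.
Lemma f_34 : f (3/4) = 3/4. Proof. unfold f; rewrite Rleb_false, Rltb_false by lra; lra. Qed.
Lemma f_1 : f 1 = 1. Proof. unfold f; rewrite Rleb_false, Rltb_false by lra; lra. Qed.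

Lemma f_lt x y : in01 x -> in01 y -> (x < y <-> f x < f y).
Proof. intros Hx Hy. pose proof (f_le y x Hy Hx). split; intros; lra. Qed.

Lemma F_closed (P : R -> Prop) :
  (forall y, P y -> P (f y)) -> (forall y, P y -> P (finv y)) ->
  forall n x, P x -> P (fiter n x).
Proof. intros Hf Hi n x Hx. destruct n; simpl; auto;
  generalize (Pos.to_nat p); intro k; induction k; simpl; auto. Qed.

Lemma F_in01 n x : in01 x -> in01 (fiter n x).
Proof. apply F_closed; [apply f_in01| intros; apply finv_spec; auto]. Qed.

Lemma Fneg k x : fiter (- Z.of_nat k) x = Nat.iter k finv x.
Proof. destruct k; [reflexivity|]. simpl. rewrite SuccNat2Pos.id_succ. reflexivity. Qed.

Lemma iter_finv_in01 k x : in01 x -> in01 (Nat.iter k finv x).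
Proof. intro H; induction k; simpl; auto. apply finv_spec; auto. Qed.

Lemma F_succ n x : in01 x -> fiter (Z.succ n) x = f (fiter n x).
Proof. intro Hx. destruct n as [|p|p].
  - reflexivity.
  - simpl. rewrite Pos.add_1_r, Pos2Nat.inj_succ; reflexivity.
  - assert (E: Zneg p = (- Z.of_nat (S (Pos.to_nat p - 1)))%Z) by lia.
    assert (E2: Z.succ (Zneg p) = (- Z.of_nat (Pos.to_nat p - 1))%Z) by lia.
    rewrite E2, E, !Fneg. simpl. symmetry; apply finv_spec, iter_finv_in01; auto.
Qed.

Lemma F_pred n x : in01 x -> fiter (Z.pred n) x = finv (fiter n x).
Proof. intro Hx. 
  assert (E: n = Z.succ (Z.pred n)) by lia.
  rewrite E at 2. rewrite F_succ by auto. rewrite finv_f; auto. apply F_in01; auto. Qed.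

Lemma F_comp n m x : in01 x -> fiter n (fiter m x) = fiter (n + m) x.
Proof. intro Hx. induction n using Z.peano_ind.
  - reflexivity.
  - rewrite Z.add_succ_l, !F_succ, IHn; auto. apply F_in01; auto.
  - rewrite Z.add_pred_l, !F_pred, IHn; auto. apply F_in01; auto. Qed.

Lemma F_mono n x y : in01 x -> in01 y -> x <= y -> fiter n x <= fiter n y.
Proof. intros Hx Hy. induction n using Z.peano_ind; intro H.
  - exact H.
  - rewrite !F_succ by auto. apply (proj1 (f_le _ _ (F_in01 n x Hx) (F_in01 n y Hy))); auto.
  - rewrite !F_pred by auto. apply (proj1 (finv_le _ _ (F_in01 n x Hx) (F_in01 n y Hy))); auto. Qed.

Definition KA x := 0 <= x <= 1/4.
Definition KM x := 1/4 < x < 3/4.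
Definition KD x := 3/4 <= x < 1.

Lemma KA_F n x : KA x -> KA (fiter n x).
Proof. apply F_closed; unfold KA; intros y Hy.
  - assert (in01 y) by (unfold in01; lra). pose proof (f_le y (1/4) H ltac:(unfold in01;lra)).
    pose proof (f_le 0 y ltac:(unfold in01;lra) H). rewrite f_14 in *; rewrite f_0 in *. tauto.
  - assert (in01 y) by (unfold in01; lra). destruct (finv_spec y H) as [A B].
    pose proof (f_le (finv y) (1/4) A ltac:(unfold in01;lra)). rewrite f_14, B in H0.
    unfold in01 in A. tauto. Qed.

Lemma KD_F n x : KD x -> KD (fiter n x).
Proof. apply F_closed; unfold KD; intros y Hy.
  - assert (in01 y) by (unfold in01; lra). pose proof (f_lt y 1 H ltac:(unfold in01;lra)).
    pose proof (f_le (3/4) y ltac:(unfold in01;lra) H). rewrite f_34, f_1 in *. unfold in01 in *. tauto.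
  - assert (in01 y) by (unfold in01; lra). destruct (finv_spec y H) as [A B].
    pose proof (f_lt (finv y) 1 A ltac:(unfold in01;lra)).
    pose proof (f_le (3/4) (finv y) ltac:(unfold in01;lra) A). rewrite f_34, f_1, B in *. tauto. Qed.

Lemma F_0 n : fiter n 0 = 0.
Proof. apply (F_closed (fun y => y = 0)).
  - intros; subst; apply f_0.
  - intros; subst. rewrite <- f_0 at 1. apply finv_f; unfold in01; lra.
  - reflexivity. Qed.

Lemma F_34 n : fiter n (3/4) = 3/4.
Proof. apply (F_closed (fun y => y = 3/4)).
  - intros; subst; apply f_34.
  - intros; subst. rewrite <- f_34 at 1. apply finv_f; unfold in01; lra.
  - reflexivity. Qed.

Lemma F_anti n m x : KA x \/ KD x -> (n <= m)%Z -> fiter m x <= fiter n x.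
Proof. intros Hx Hnm.
  assert (step: forall k, fiter (Z.succ k) x <= fiter k x).
  { intro k. assert (H: KA (fiter k x) \/ KD (fiter k x)) by (destruct Hx; [left; apply KA_F|right; apply KD_F]; auto).
    assert (in01 x) by (unfold in01, KA, KD in *; lra).
    rewrite F_succ by auto. generalize H; generalize (fiter k x). intros y Hy.
    unfold f, Rleb, Rltb, KA, KD in *; destruct (Rle_dec y (1/4)); [|destruct (Rlt_dec y (3/4))]; nra. }
  replace m with (n + Z.of_nat (Z.to_nat (m - n)))%Z by lia.
  induction (Z.to_nat (m-n)). rewrite Z.add_0_r; lra.
  rewrite Nat2Z.inj_succ, Z.add_succ_r. specialize (step (n + Z.of_nat n0)%Z). lra. Qed.

Definition E (t : R) : R := exp (- exp (t * ln 2) * ln 2).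
Definition tinv (t : R) : R := 1/4 + 1/2 * E t.
Definition Einv (p : R) : R := ln (- ln p / ln 2) / ln 2.
Definition tau (y : R) : R := Einv (2 * (y - 1/4)).

Lemma ln2_pos : 0 < ln 2. Proof. pose proof ln_lt_2; lra. Qed.

Lemma E_pos t : 0 < E t. Proof. apply exp_pos. Qed.
Lemma E_lt1 t : E t < 1.
Proof. unfold E. rewrite <- exp_0. apply exp_increasing.
  pose proof (exp_pos (t * ln 2)); pose proof ln2_pos; nra. Qed.

Lemma E_decr a b : a < b -> E b < E a.
Proof. intro H. unfold E. apply exp_increasing. pose proof ln2_pos.
  assert (exp (a * ln 2) < exp (b * ln 2)) by (apply exp_increasing; nra). nra. Qed.

Lemma E_lt a b : E a < E b <-> b < a.
Proof. split; intro H.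
  - destruct (Rlt_le_dec b a); auto. destruct r. pose proof (E_decr _ _ H0); lra. subst; lra.
  - apply E_decr; auto. Qed.

Lemma E_le a b : E a <= E b <-> b <= a.
Proof. pose proof (E_lt b a). split; intros; lra. Qed.

Lemma Einv_E t : Einv (E t) = t.
Proof. unfold Einv, E. rewrite ln_exp. pose proof ln2_pos.
  replace (- (- exp (t * ln 2) * ln 2) / ln 2) with (exp (t * ln 2)) by (field; lra).
  rewrite ln_exp. field; lra. Qed.

Lemma E_Einv p : 0 < p < 1 -> E (Einv p) = p.
Proof. intro H. unfold Einv, E. pose proof ln2_pos.
  assert (ln p < 0). { rewrite <- ln_1. apply ln_increasing; lra. }
  replace (ln (- ln p / ln 2) / ln 2 * ln 2) with (ln (- ln p / ln 2)) by (field; lra).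
  rewrite exp_ln. 2:{ apply Rdiv_lt_0_compat; lra. }
  replace (- (- ln p / ln 2) * ln 2) with (ln p) by (field; lra). apply exp_ln; lra. Qed.

Lemma E_sq t : E t * E t = E (t + 1).
Proof. unfold E. rewrite <- exp_plus. f_equal.
  rewrite Rmult_plus_distr_r, Rmult_1_l, exp_plus, exp_ln by lra. ring. Qed.

Lemma E_0 : E 0 = 1/2.
Proof. unfold E. replace (- exp (0 * ln 2) * ln 2) with (- ln 2) by (rewrite Rmult_0_l, exp_0; ring).
  rewrite exp_Ropp, exp_ln by lra. lra. Qed.

Lemma Rpower_E t k : Rpower (E t) (powerRZ 2 k) = E (t + IZR k).
Proof. unfold Rpower. rewrite powerRZ_Rpower by lra. unfold Rpower, E at 1. rewrite ln_exp.
  unfold E. f_equal. rewrite Rmult_plus_distr_r, exp_plus. ring. Qed.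

Lemma Rpower2_E n : Rpower 2 (- powerRZ 2 n) = E (IZR n).
Proof. unfold E, Rpower. rewrite powerRZ_Rpower by lra. unfold Rpower. f_equal; ring. Qed.

Lemma KM_tinv t : KM (tinv t).
Proof. unfold KM, tinv. pose proof (E_pos t); pose proof (E_lt1 t); lra. Qed.

Lemma tau_tinv t : tau (tinv t) = t.
Proof. unfold tau, tinv. replace (2 * (1 / 4 + 1 / 2 * E t - 1 / 4)) with (E t) by field.
  apply Einv_E. Qed.

Lemma tinv_tau y : KM y -> tinv (tau y) = y.
Proof. unfold KM, tinv, tau; intro H. rewrite E_Einv by lra. field. Qed.

Lemma tinv_lt a b : tinv a < tinv b <-> b < a.
Proof. unfold tinv. pose proof (E_lt a b). split; intros; lra. Qed.
Lemma tinv_le a b : tinv a <= tinv b <-> b <= a.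
Proof. unfold tinv. pose proof (E_le a b). split; intros; lra. Qed.

Lemma tau_anti x y : KM x -> KM y -> x <= y -> tau y <= tau x.
Proof. intros Hx Hy H. apply tinv_le. rewrite !tinv_tau; auto. Qed.

Lemma tinv_0 : tinv 0 = 1/2. Proof. unfold tinv; rewrite E_0; lra. Qed.
Lemma tau_half : tau (1/2) = 0. Proof. rewrite <- tinv_0. apply tau_tinv. Qed.

Lemma f_tinv t : f (tinv t) = tinv (t + 1).
Proof. pose proof (KM_tinv t) as H. unfold KM in H. unfold f. rewrite Rleb_false, Rltb_true by lra.
  unfold tinv. rewrite <- E_sq. field. Qed.

Lemma in01_KM x : KM x -> in01 x. Proof. unfold KM, in01; lra. Qed.

Lemma F_tinv n t : fiter n (tinv t) = tinv (t + IZR n).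
Proof. induction n using Z.peano_ind.
  - change (tinv t = tinv (t + 0)); f_equal; ring.
  - rewrite F_succ by (apply in01_KM, KM_tinv). rewrite IHn, f_tinv, succ_IZR. f_equal; ring.
  - rewrite F_pred by (apply in01_KM, KM_tinv). rewrite IHn.
    replace (t + IZR n) with ((t + IZR (Z.pred n)) + 1).
    + rewrite <- f_tinv, finv_f; auto. apply in01_KM, KM_tinv.
    + rewrite <- Z.sub_1_r, minus_IZR. ring. Qed.

Lemma KM_F n x : KM x -> KM (fiter n x).
Proof. intro H. rewrite <- (tinv_tau x H), F_tinv. apply KM_tinv. Qed.

Definition fl (t : R) : Z := (up t - 1)%Z.
Lemma fl_spec t : IZR (fl t) <= t < IZR (fl t) + 1.
Proof. unfold fl. rewrite minus_IZR. destruct (archimed t). lra. Qed.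
Lemma fl_unique n t : IZR n <= t < IZR n + 1 -> fl t = n.
Proof. intro H. destruct (fl_spec t).
  assert (IZR (fl t) < IZR n + 1) by lra. assert (IZR n < IZR (fl t) + 1) by lra.
  rewrite <- plus_IZR in *. apply lt_IZR in H2, H3. lia. Qed.
Lemma fl_mono a b : a <= b -> (fl a <= fl b)%Z.
Proof. intro H. destruct (fl_spec a), (fl_spec b). assert (IZR (fl a) < IZR (fl b) + 1) by lra.
  rewrite <- plus_IZR in H4. apply lt_IZR in H4. lia. Qed.
Lemma fl_0 : fl 0 = 0%Z. Proof. apply fl_unique. simpl; lra. Qed.

Definition G (a b : R) : R := Rmax (a + IZR (fl b)) (b + IZR (fl a)).

Lemma G_alt a b : G a b = IZR (fl a) + IZR (fl b) + Rmax (a - IZR (fl a)) (b - IZR (fl b)).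
Proof. unfold G, Rmax. destruct (Rle_dec _ _), (Rle_dec _ _); lra. Qed.

Lemma fl_G a b : fl (G a b) = (fl a + fl b)%Z.
Proof. apply fl_unique. rewrite G_alt, plus_IZR. destruct (fl_spec a), (fl_spec b).
  unfold Rmax; destruct (Rle_dec _ _); lra. Qed.

Lemma G_comm a b : G a b = G b a.
Proof. unfold G. apply Rmax_comm. Qed.

Lemma G_assoc a b c : G (G a b) c = G a (G b c).
Proof. unfold G at 1 3. rewrite !fl_G, !plus_IZR. unfold G, Rmax.
  repeat destruct (Rle_dec _ _); lra. Qed.

Lemma G_mono a1 a2 b : a1 <= a2 -> G a1 b <= G a2 b.
Proof. intro H. pose proof (fl_mono _ _ H) as H'. apply IZR_le in H'. unfold G, Rmax.
  repeat destruct (Rle_dec _ _); lra. Qed.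

Lemma G_0l b : G 0 b = b.
Proof. unfold G. rewrite fl_0. destruct (fl_spec b). unfold Rmax; destruct (Rle_dec _ _); simpl in *; lra. Qed.

Lemma fiter_e n : fiter n e_ = tinv (IZR n).
Proof. unfold e_. rewrite <- tinv_0, F_tinv. f_equal; ring. Qed.

Lemma f_idx_eq y : KM y -> f_idx y = fl (tau y).
Proof. intro H.
  assert (Hb: forall n, f_band n y <-> IZR n <= tau y < IZR n + 1).
  { intro n. unfold f_band. rewrite !fiter_e, plus_IZR. rewrite <- (tinv_tau y H) at 1 2.
    rewrite tinv_lt, tinv_le. simpl. tauto. }
  symmetry; apply fl_unique. apply Hb. unfold f_idx. apply epsilon_spec.
  exists (fl (tau y)). apply Hb, fl_spec. Qed.

Lemma U1_idx_eq t : U1_idx (E t) = fl t.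
Proof.
  assert (Hb: forall n, U1_band n (E t) <-> IZR n <= t < IZR n + 1).
  { intro n. unfold U1_band. rewrite !Rpower2_E, plus_IZR, E_lt, E_le. simpl. tauto. }
  symmetry; apply fl_unique. apply Hb. unfold U1_idx. apply epsilon_spec.
  exists (fl t). apply Hb, fl_spec. Qed.

Lemma Rmin_E u v : Rmin (E u) (E v) = E (Rmax u v).
Proof. unfold Rmin, Rmax. destruct (Rle_dec (E u) (E v)) as [r|r]; destruct (Rle_dec u v) as [s|s].
  - rewrite E_le in r. assert (u = v) by lra. subst; reflexivity.
  - reflexivity.
  - reflexivity.
  - assert (E v < E u) by lra. rewrite E_lt in H. lra. Qed.

Lemma U1star_KM x y : KM x -> KM y -> U1star x y = tinv (G (tau x) (tau y)).
Proof. intros Hx Hy. unfold U1star, tinv. f_equal. f_equal.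
  rewrite <- (tinv_tau x Hx), <- (tinv_tau y Hy). rewrite !tau_tinv.
  unfold tinv. set (a := tau x). set (b := tau y).
  replace (2 * (1 / 4 + 1 / 2 * E a - 1 / 4)) with (E a) by field.
  replace (2 * (1 / 4 + 1 / 2 * E b - 1 / 4)) with (E b) by field.
  unfold U1. pose proof (E_pos a); pose proof (E_pos b); pose proof (E_lt1 a); pose proof (E_lt1 b).
  rewrite Reqb_false. 2:{ assert (Rmax (E a) (E b) < 1) by (apply Rmax_lub_lt; lra). lra. }
  rewrite Reqb_false. 2:{ assert (0 < Rmin (E a) (E b)) by (apply Rmin_glb_lt; lra). lra. }
  rewrite !U1_idx_eq, !Rpower_E, !opp_IZR.
  rewrite Rmin_E, Rpower_E, plus_IZR. f_equal. unfold G, Rmax.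
  repeat destruct (Rle_dec _ _); lra.
Qed.

Lemma inA_T x : KA x -> inA x = true.
Proof. unfold KA, inA, a_; intro; rewrite !Rleb_true by lra; reflexivity. Qed.
Lemma inA_F x : 1/4 < x -> inA x = false.
Proof. unfold inA, a_; intro; rewrite (Rleb_false x) by lra; destruct (Rleb _ _); reflexivity. Qed.
Lemma inD_T x : KD x -> inD x = true.
Proof. unfold KD, inD, d_; intro; rewrite Rleb_true, Rltb_true by lra; reflexivity. Qed.
Lemma inD_F x : x < 3/4 -> inD x = false.
Proof. unfold inD, d_; intro; rewrite Rleb_false by lra; reflexivity. Qed.
Lemma inMid_T x : KM x -> inMid x = true.
Proof. unfold KM, inMid, a_, d_; intro; rewrite !Rltb_true by lra; reflexivity. Qed.
Lemma inMid_Fl x : x <= 1/4 -> inMid x = false.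
Proof. unfold inMid, a_, d_; intro; rewrite (Rltb_false (1/4)) by lra; reflexivity. Qed.
Lemma inMid_Fr x : 3/4 <= x -> inMid x = false.
Proof. unfold inMid, a_, d_; intro; rewrite (Rltb_false x) by lra; destruct (Rltb (1/4) x); reflexivity. Qed.

Lemma Rmax_ne1 x y : x < 1 -> y < 1 -> Rmax x y <> 1.
Proof. intros. assert (Rmax x y < 1) by (apply Rmax_lub_lt; auto). lra. Qed.

Ltac kk := unfold KA, KM, KD, in01 in *; lra.

Lemma U_1l y : in01 y -> U 1 y = 1.
Proof. intro H; unfold U, in01 in *. rewrite Rmax_left by lra. rewrite Reqb_true; reflexivity. Qed.
Lemma U_1r x : in01 x -> U x 1 = 1.
Proof. intro H; unfold U, in01 in *. rewrite Rmax_right by lra. rewrite Reqb_true; reflexivity. Qed.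

Lemma U_AA x y : KA x -> KA y -> U x y = 0.
Proof. intros Hx Hy; unfold U. rewrite Reqb_false by (apply Rmax_ne1; kk).
  rewrite (inA_T x), (inA_T y) by kk. reflexivity. Qed.
Lemma U_DD x y : KD x -> KD y -> U x y = 1.
Proof. intros Hx Hy; unfold U. rewrite Reqb_false by (apply Rmax_ne1; kk).
  rewrite (inA_F x), (inD_T x), (inD_T y) by kk. reflexivity. Qed.
Lemma U_AD x y : KA x -> KD y -> U x y = 3/4.
Proof. intros Hx Hy; unfold U. rewrite Reqb_false by (apply Rmax_ne1; kk).
  rewrite (inA_T x), (inA_F y), (inD_F x), (inD_T y) by kk. reflexivity. Qed.
Lemma U_DA x y : KD x -> KA y -> U x y = 3/4.
Proof. intros Hx Hy; unfold U. rewrite Reqb_false by (apply Rmax_ne1; kk).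
  rewrite (inA_F x), (inA_T y), (inD_F y), (inD_T x) by kk. reflexivity. Qed.
Lemma U_AM x y : KA x -> KM y -> U x y = fiter (fl (tau y)) x.
Proof. intros Hx Hy; unfold U. rewrite Reqb_false by (apply Rmax_ne1; kk).
  rewrite (inA_T x), (inA_F y), (inD_F x), (inD_F y), (inMid_T y) by kk. cbn [andb orb].
  rewrite f_idx_eq; auto. Qed.
Lemma U_DM x y : KD x -> KM y -> U x y = fiter (fl (tau y)) x.
Proof. intros Hx Hy; unfold U. rewrite Reqb_false by (apply Rmax_ne1; kk).
  rewrite (inA_F x), (inA_F y), (inD_T x), (inD_F y), (inMid_T y) by kk. cbn [andb orb].
  rewrite f_idx_eq; auto. Qed.
Lemma U_MA x y : KM x -> KA y -> U x y = fiter (fl (tau x)) y.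
Proof. intros Hx Hy; unfold U. rewrite Reqb_false by (apply Rmax_ne1; kk).
  rewrite (inA_F x), (inA_T y), (inD_F x), (inD_F y), (inMid_T x), (inMid_Fl y) by kk. cbn [andb orb].
  rewrite f_idx_eq; auto. Qed.
Lemma U_MD x y : KM x -> KD y -> U x y = fiter (fl (tau x)) y.
Proof. intros Hx Hy; unfold U. rewrite Reqb_false by (apply Rmax_ne1; kk).
  rewrite (inA_F x), (inA_F y), (inD_F x), (inD_T y), (inMid_T x), (inMid_Fr y) by kk. cbn [andb orb].
  rewrite f_idx_eq; auto. Qed.
Lemma U_MM x y : KM x -> KM y -> U x y = tinv (G (tau x) (tau y)).
Proof. intros Hx Hy; unfold U. rewrite Reqb_false by (apply Rmax_ne1; kk).
  rewrite (inA_F x), (inA_F y), (inD_F x), (inD_F y), (inMid_T x), (inMid_T y) by kk. cbn [andb orb].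
  apply U1star_KM; auto. Qed.

Lemma kind_dec x : in01 x -> KA x \/ KM x \/ KD x \/ x = 1.
Proof. unfold in01, KA, KM, KD; intro H.
  destruct (Rle_dec x (1/4)); [left; lra|].
  destruct (Rlt_dec x (3/4)); [right; left; lra|].
  destruct (Req_dec x 1); [right; right; right; auto| right; right; left; lra]. Qed.

Lemma in01_KA x : KA x -> in01 x. Proof. kk. Qed.
Lemma in01_KD x : KD x -> in01 x. Proof. kk. Qed.

Ltac kauto := first [ assumption
  | apply KA_F; kauto | apply KD_F; kauto | apply KM_F; kauto | apply KM_tinv
  | apply F_in01; kauto | apply in01_KA; kauto | apply in01_KD; kauto | apply in01_KM; kauto
  | kk ].

Ltac stepU :=
  match goal with
  | |- context [U ?a ?b] =>
    lazymatch a with context [U _ _] => fail | _ => idtac end;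
    lazymatch b with context [U _ _] => fail | _ => idtac end;
    first [ rewrite (U_1l b ltac:(kauto)) | rewrite (U_1r a ltac:(kauto))
          | rewrite (U_AA a b ltac:(kauto) ltac:(kauto))
          | rewrite (U_DD a b ltac:(kauto) ltac:(kauto))
          | rewrite (U_AD a b ltac:(kauto) ltac:(kauto))
          | rewrite (U_DA a b ltac:(kauto) ltac:(kauto))
          | rewrite (U_AM a b ltac:(kauto) ltac:(kauto))
          | rewrite (U_DM a b ltac:(kauto) ltac:(kauto))
          | rewrite (U_MA a b ltac:(kauto) ltac:(kauto))
          | rewrite (U_MD a b ltac:(kauto) ltac:(kauto))
          | rewrite (U_MM a b ltac:(kauto) ltac:(kauto)) ]
  end.

Ltac normU :=
  repeat (first [ stepU | rewrite F_0 | rewrite F_34 | rewrite tau_tinv | rewrite fl_G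
    | match goal with |- context [fiter ?n (fiter ?m ?x)] => rewrite (F_comp n m x ltac:(kauto)) end ]).

Ltac kinds x Hx := destruct (kind_dec x Hx) as [?|[?|[?|?]]]; [| | | subst x].

Lemma U_in01 x y : in01 x -> in01 y -> in01 (U x y).
Proof. intros Hx Hy. kinds x Hx; kinds y Hy; normU; kauto. Qed.

Lemma U_comm x y : in01 x -> in01 y -> U x y = U y x.
Proof. intros Hx Hy. kinds x Hx; kinds y Hy; normU; try reflexivity. f_equal; apply G_comm. Qed.

Lemma U_assoc x y z : in01 x -> in01 y -> in01 z -> U (U x y) z = U x (U y z).
Proof. intros Hx Hy Hz. kinds x Hx; kinds y Hy; kinds z Hz; normU;
  try reflexivity; try (f_equal; ring); try (f_equal; apply G_assoc). Qed.

Ltac addkind t := first [ let h := fresh in assert (h : KA t) by kauto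
  | let h:= fresh in assert (h: KM t) by kauto | let h := fresh in assert (h: KD t) by kauto | idtac ].

Ltac monofin := first [ apply F_mono; kauto
  | apply (proj2 (tinv_le _ _)); apply G_mono; apply tau_anti; kauto
  | apply F_anti; [ (left; kauto) || (right; kauto) | apply fl_mono, tau_anti; kauto ]
  | match goal with |- ?u <= ?v => addkind u; addkind v end; kk ].

Lemma U_mono x1 x2 y : in01 x1 -> in01 x2 -> in01 y -> x1 <= x2 -> U x1 y <= U x2 y.
Proof. intros H1 H2 Hy H. kinds x1 H1; kinds x2 H2; try kk; kinds y Hy; normU; monofin. Qed.

Lemma U_neutral x : in01 x -> U (1/2) x = x.
Proof. intro Hx. assert (KM (1/2)) by kk. kinds x Hx; normU; rewrite ?tau_half, ?fl_0; try reflexivity.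
  rewrite G_0l, tinv_tau; auto. Qed.

Theorem mainTheorem12 : disjunctive_uninorm U (1/2).
Proof. split.
  - split; [exact U_in01|]. split; [exact U_comm|]. split; [exact U_assoc|]. split; [exact U_mono|].
    split. { intros x y1 y2 Hx H1 H2 H. rewrite (U_comm x y1), (U_comm x y2) by auto. apply U_mono; auto. }
    split. { kk. }
    intros x Hx. split. apply U_neutral; auto. rewrite U_comm by (auto; kk). apply U_neutral; auto.
  - apply U_1l. kk.
Qed.
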